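(* Let $U$ be a nonempty finite set, $R\subseteq U\times U$ serial and transitive, and $r$ the rank function of $M(Reg(U,R))$. Then for every $X\in Reg(U,R)$ and every $e\in U\setminus X$, $r(X\cup\{e\})=h(X)+1$.
   Context: $R_s(x)=\{y\in U\mid xRy\}$; $\underline{R}(X)=\{x\mid R_s(x)\subseteq X\}$, $\overline{R}(X)=\{x\mid R_s(x)\cap X\neq\emptyset\}$; $X$ is regular if $X=\underline{R}(\overline{R}(X))$, and $Reg(U,R)$ is the lattice of regular sets under inclusion, with least element $\emptyset$. $h(A)$ is the length of a maximal chain in $[\emptyset,A]$. $M(Reg(U,R))$ is the matroid on $U$ with independent sets $\{X\subseteq U\mid h(Y)\ge|X\cap Y|\ \forall Y\in Reg(U,R)\}$ and rank function $r(X)=\max\{|I|\mid I\subseteq X \text{ independent}\}$. *)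

(* Defs.v *)
From mathcomp Require Import all_boot.
Set Implicit Arguments. Unset Strict Implicit. Unset Printing Implicit Defensive.

Section RoughSets.
Variables (U : finType) (R : rel U).

Definition Rs (x : U) : {set U} := [set y | R x y].

Definition lowerR (X : {set U}) : {set U} := [set x | Rs x \subset X].
Definition upperR (X : {set U}) : {set U} := [set x | Rs x :&: X != set0].

Definition regular (X : {set U}) : bool := X == lowerR (upperR X).

Definition reg_chain_below (A : {set U}) (C : {set {set U}}) : bool :=
  [forall Y in C, regular Y && (Y \subset A)] &&
  [forall Y in C, forall Z in C, (Y \subset Z) || (Z \subset Y)].

(* h(A): length (number of elements minus one) of a longest chain in the
   interval [set0, A] of the lattice Reg(U,R). *)
Definition h (A : {set U}) : nat :=
  (\max_(C : {set {set U}} | reg_chain_below A C) #|C|).-1.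

Definition reg_indep (X : {set U}) : bool :=
  [forall Y : {set U}, regular Y ==> (#|X :&: Y| <= h Y)].

Definition reg_rank (X : {set U}) : nat :=
  \max_(I : {set U} | (I \subset X) && reg_indep I) #|I|.

End RoughSets.

(* Main.v *)
Require Import Defs.
From mathcomp Require Import all_boot.
Set Implicit Arguments. Unset Strict Implicit. Unset Printing Implicit Defensive.

Section Work.
Variables (U : finType) (R : rel U).
Hypothesis hser : forall x : U, exists y : U, R x y.
Hypothesis htr : transitive R.

Definition term (z : U) := [forall w, R z w ==> R w z].

Lemma inRs x y : (y \in Rs R x) = R x y.
Proof. by rewrite inE. Qed.

Lemma termP z w : term z -> R z w -> R w z.
Proof. by move=> /forallP /(_ w) /implyP. Qed.

Lemma term_refl z : term z -> R z z.
Proof. move=> tz; have [w zw] := hser z; exact: htr (termP tz zw). Qed.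

Lemma term_succ z w : term z -> R z w -> term w /\ Rs R w = Rs R z.
Proof.
move=> tz zw; have wz := termP tz zw; split.
  apply/forallP=> u; apply/implyP=> wu.
  exact: htr (termP tz (htr zw wu)) _.
apply/setP=> u; rewrite !inRs; apply/idP/idP => H.
  exact: htr zw H.
exact: htr wz H.
Qed.

Lemma Rs_sub x y : R x y -> Rs R y \subset Rs R x.
Proof. move=> xy; apply/subsetP=> u; rewrite !inRs; exact: htr. Qed.

Lemma exists_term y : exists2 z, R y z & term z.
Proof.
have [w0 yw0] := hser y.
have w0in : w0 \in Rs R y by rewrite inRs.
have [w wy wmin] := arg_minnP (fun w => #|Rs R w|) w0in.
have {}wy : R y w by rewrite -inRs.
have [v wv] := hser w.
have eqv : forall u, R w u -> Rs R u = Rs R w.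
  move=> u wu; apply/eqP; rewrite eqEcard Rs_sub //=.
  apply: wmin; have : u \in Rs R y by rewrite inRs; exact: htr wy wu.
  by [].
exists v; first exact: htr wy wv.
apply/forallP=> u; apply/implyP=> vu.
have wu : R w u by exact: htr wv vu.
have : v \in Rs R u by rewrite (eqv u wu) inRs.
by rewrite inRs.
Qed.

Definition rep (z : U) := odflt z [pick w in Rs R z].
Definition Reps := [set r | term r && (rep r == r)].

Lemma rep_in z : term z -> R z (rep z).
Proof.
move=> tz; rewrite /rep; case: pickP => [w|] /=; first by rewrite inRs.
by move=> /(_ z); rewrite inRs term_refl.
Qed.

Lemma repE z w : term z -> Rs R w = Rs R z -> rep w = rep z.
Proof.
move=> tz eq; have zz : z \in Rs R w by rewrite eq inRs term_refl.
rewrite /rep eq; case: pickP => //= /(_ z); by rewrite -eq zz.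
Qed.

Lemma rep_Reps z : term z -> rep z \in Reps.
Proof.
move=> tz; have [tr eq] := term_succ tz (rep_in tz).
by rewrite inE tr /= (repE tz eq).
Qed.

Lemma Reps_eq r s : r \in Reps -> s \in Reps -> R r s -> r = s.
Proof.
rewrite !inE => /andP[tr /eqP er] /andP[ts /eqP es] rs.
have [_ eq] := term_succ tr rs.
by rewrite -er -es (repE tr eq).
Qed.

Lemma Char W x : x \in lowerR R (upperR R W) <->
  (forall z, R x z -> term z -> Rs R z :&: W != set0).
Proof.
rewrite inE; split.
  move=> /subsetP H z xz _; have := H z; rewrite inRs inE; exact.
move=> H; apply/subsetP=> y; rewrite inRs inE => xy.
have [z yz tz] := exists_term y.
have /set0Pn [u] := H z (htr xy yz) tz.
rewrite inE inRs => /andP[zu uW]; apply/set0Pn; exists u.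
by rewrite inE uW andbT inRs (htr yz zu).
Qed.

Lemma Reg Z z : regular R Z -> term z -> (z \in Z) = (Rs R z :&: Z != set0).
Proof.
move=> /eqP hZ tz; apply/idP/idP => H.
  move: H; rewrite {1}hZ => /Char H; exact: H _ (term_refl tz) tz.
rewrite hZ; apply/Char=> w zw tw.
by have [_ ->] := term_succ tz zw.
Qed.

Lemma subA Z Z' : regular R Z -> regular R Z' -> Z :&: Reps \subset Z' ->
  Z \subset Z'.
Proof.
move=> hZ hZ' sub; apply/subsetP=> x xZ.
move: (hZ') => /eqP ->; apply/Char => z xz tz.
have rz := rep_in tz.
have [tr eq] := term_succ tz rz.
have rZ : rep z \in Z.
  rewrite (Reg hZ tr) eq; have := xZ; rewrite {1}(eqP hZ) => /Char H.
  exact: H z xz tz.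
have : rep z \in Z' by apply: (subsetP sub); rewrite inE rZ rep_Reps.
move=> rZ'; apply/set0Pn; exists (rep z); by rewrite inE rZ' inRs rz.
Qed.

Definition ZofS (S : {set U}) := lowerR R (upperR R S).

Lemma ZofS_term (S : {set U}) z : S \subset Reps -> term z ->
  (Rs R z :&: ZofS S != set0) = (Rs R z :&: S != set0).
Proof.
move=> SR tz; apply/idP/idP.
  move=> /set0Pn [u]; rewrite inE inRs => /andP[zu /Char H].
  have [tu eq] := term_succ tz zu.
  by rewrite -eq; apply: H (term_refl tu) tu.
move=> H; apply/set0Pn; exists z; rewrite inE inRs term_refl //=.
apply/Char => w zw tw; by have [_ ->] := term_succ tz zw.
Qed.

Lemma ZofS_reg (S : {set U}) : S \subset Reps -> regular R (ZofS S).
Proof.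
move=> SR; apply/eqP/setP => x; apply/idP/idP.
  move=> /Char H; apply/Char => z xz tz; rewrite (ZofS_term SR tz); exact: H.
move=> /Char H; apply/Char => z xz tz; rewrite -(ZofS_term SR tz); exact: H.
Qed.

Lemma ZofS_Reps (S : {set U}) : S \subset Reps -> ZofS S :&: Reps = S.
Proof.
move=> SR; apply/setP => r; rewrite inE.
case rR: (r \in Reps); last first.
  by rewrite andbF; apply/esym/negbTE; apply: contraFN rR; apply: (subsetP SR).
rewrite andbT; have tr : term r by move: rR; rewrite inE => /andP[].
apply/idP/idP.
  move=> /Char H; have /set0Pn [s] := H r (term_refl tr) tr.
  rewrite inE inRs => /andP[rs sS].
  by rewrite (Reps_eq rR (subsetP SR _ sS) rs).
move=> rS; apply/Char => w rw tw.
have [_ ->] := term_succ tr rw.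
by apply/set0Pn; exists r; rewrite inE rS inRs term_refl.
Qed.

Lemma regI_eq Z Z' : regular R Z -> regular R Z' -> Z \subset Z' ->
  #|Z :&: Reps| = #|Z' :&: Reps| -> Z = Z'.
Proof.
move=> hZ hZ' sZ ec; apply/eqP; rewrite eqEsubset sZ /=.
apply: subA => //.
have sI : Z :&: Reps \subset Z' :&: Reps by apply: setSI.
have : Z :&: Reps == Z' :&: Reps by rewrite eqEcard sI ec /=.
by move=> /eqP <-; apply: subsetIl.
Qed.

Lemma chain_le Y C : regular R Y -> reg_chain_below R Y C ->
  #|C| <= #|Y :&: Reps|.+1.
Proof.
move=> hY /andP[/forall_inP H1 /forall_inP H2].
set n := #|Y :&: Reps|.
have bnd Z : Z \in C -> #|Z :&: Reps| <= n.
  move=> /H1 /andP[_ sZ]; apply: subset_leq_card; exact: setSI.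
pose f (Z : {set U}) : 'I_n.+1 := inord #|Z :&: Reps|.
rewrite -(card_in_imset (f := f)); last first.
  move=> Z Z' ZC Z'C; rewrite /f => /(congr1 (@nat_of_ord _)).
  rewrite !inordK ?ltnS ?bnd // => ec.
  have /andP[rZ _] := H1 _ ZC; have /andP[rZ' _] := H1 _ Z'C.
  have := H2 _ ZC => /forall_inP /(_ _ Z'C) /orP [s|s].
    exact: regI_eq.
  by apply/esym; apply: regI_eq.
by apply: leq_trans (max_card _) _; rewrite card_ord.
Qed.

Definition chainS (Y : {set U}) (k : 'I_#|Y :&: Reps|.+1) :=
  ZofS [set x in take k (enum (Y :&: Reps))].

Lemma chainS_sub Y k : [set x in take k (enum (Y :&: Reps))] \subset Reps.
Proof.
apply/subsetP=> x; rewrite inE => /mem_take; rewrite mem_enum inE.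
by case/andP.
Qed.

Lemma chainS_Reps Y k : chainS (Y:=Y) k :&: Reps = [set x in take k (enum (Y :&: Reps))].
Proof. exact: ZofS_Reps (chainS_sub _ _). Qed.

Lemma chainS_card Y k : #|chainS (Y:=Y) k :&: Reps| = k.
Proof.
rewrite chainS_Reps cardsE; move/card_uniqP: (take_uniq k (enum_uniq (mem (Y :&: Reps)))) => ->.
rewrite size_take -cardE; case: k => k /=; rewrite ltnS leq_eqVlt.
by case/orP => [/eqP ->|->]; rewrite ?ltnn.
Qed.

Lemma chain_ge Y : regular R Y -> exists2 C, reg_chain_below R Y C & #|C| = #|Y :&: Reps|.+1.
Proof.
move=> hY; exists [set chainS k | k : 'I_#|Y :&: Reps|.+1]; last first.
  rewrite card_imset ?card_ord // => k l e.
  by apply/val_inj; rewrite /= -(chainS_card k) -(chainS_card l) e.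
apply/andP; split.
  apply/forall_inP => Z /imsetP [k _ ->]; rewrite ZofS_reg ?chainS_sub //=.
  apply: subA => //; first exact: ZofS_reg (chainS_sub _ _).
  rewrite chainS_Reps; apply/subsetP => x; rewrite inE => /mem_take.
  by rewrite mem_enum inE => /andP[].
apply/forall_inP => Z /imsetP [k _ ->]; apply/forall_inP => Z' /imsetP [l _ ->].
have sub (a b : 'I_#|Y :&: Reps|.+1) : a <= b -> chainS (Y:=Y) a \subset chainS b.
  move=> ab; apply: subA; try exact: ZofS_reg (chainS_sub _ _).
  apply: subset_trans (_ : _ \subset chainS b :&: Reps) (subsetIl _ _).
  rewrite !chainS_Reps; apply/subsetP => x; rewrite !inE.
  rewrite -(take_takel _ ab); exact: mem_take.
by case: (leqP k l) => [kl|/ltnW lk]; rewrite ?(sub _ _ kl) ?(sub _ _ lk) ?orbT.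
Qed.

Lemma hE Y : regular R Y -> h R Y = #|Y :&: Reps|.
Proof.
move=> hY; rewrite /h.
have -> : \max_(C : {set {set U}} | reg_chain_below R Y C) #|C| = #|Y :&: Reps|.+1 => //.
apply/eqP; rewrite eqn_leq; apply/andP; split.
  by apply/bigmax_leqP => C; apply: chain_le.
have [C HC <-] := chain_ge hY.
exact: (@leq_bigmax_cond _ (fun C => reg_chain_below R Y C) (fun C => #|C|) C HC).
Qed.

Lemma cardU1_le (a : U) (A : {set U}) : #|a |: A| <= #|A|.+1.
Proof. by rewrite cardsU1 addnC -addn1 leq_add2l leq_b1. Qed.

Lemma main X e : regular R X -> e \notin X -> reg_rank R (e |: X) = (h R X).+1.
Proof.
move=> hX he; rewrite (hE hX).
apply/eqP; rewrite eqn_leq; apply/andP; split.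
  apply/bigmax_leqP => I /andP[sI /forallP ind].
  have := ind X; rewrite hX /= (hE hX) => le.
  apply: leq_trans (_ : #|I| <= #|I :&: X|.+1) _; last by rewrite ltnS.
  apply: leq_trans (cardU1_le e (I :&: X)).
  apply: subset_leq_card; apply/subsetP => x xI.
  have := subsetP sI x xI; rewrite !inE xI /=; by [].
set I0 := e |: (X :&: Reps).
have I0s : I0 \subset e |: X by apply: setUS; apply: subsetIl.
have cI0 : #|I0| = #|X :&: Reps|.+1.
  by rewrite cardsU1 inE (negbTE he).
have hP : (I0 \subset e |: X) && reg_indep R I0; last first.
  rewrite -cI0 /reg_rank; exact: (@leq_bigmax_cond _ (fun I : {set U} => (I \subset e |: X) && reg_indep R I) (fun I : {set U} => #|I|) I0 hP).
rewrite I0s /=; apply/forallP => Y; apply/implyP => hY; rewrite (hE hY).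
case eY: (e \in Y); last first.
  apply: subset_leq_card; apply/subsetP => x; rewrite !inE.
  case/andP => /orP[/eqP ->|/andP[_ ->]]; by rewrite ?eY // => ->.
have [y ey ny] : exists2 y, y \in Rs R e & y \notin upperR R X.
  apply/subsetPn; apply: contra he; rewrite {2}(eqP hX) inE; exact.
rewrite inRs in ey; rewrite inE negbK in ny.
have [z yz tz] := exists_term y.
set r := rep z.
have rR : r \in Reps := rep_Reps tz.
have tr : term r by move: rR; rewrite inE => /andP[].
have yr : R y r := htr yz (rep_in tz).
have rX : r \notin X.
  apply/negP => rX; move/eqP: ny => ny.
  have : r \in Rs R y :&: X by rewrite inE inRs yr rX.
  by rewrite ny inE.
have rY : r \in Y.
  rewrite (Reg hY tr); move: eY; rewrite {1}(eqP hY) => /Char H.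
  exact: H r (htr ey yr) tr.
set A := (X :&: Reps) :&: Y.
apply: (@leq_trans #|e |: A|).
  apply: subset_leq_card; apply/subsetP => x; rewrite !inE.
  by case/andP => /orP[->|->] // ->; rewrite orbT.
apply: leq_trans (cardU1_le e A) _.
apply: proper_card; apply/properP; split.
  by apply/subsetP => x; rewrite !inE => /andP[/andP[_ ->] ->].
exists r; first by rewrite in_setI rY rR.
by rewrite !in_setI (negbTE rX).
Qed.
End Work.

Theorem proposition6 (U : finType) (R : rel U)
  (hne : 0 < #|U|)
  (hser : forall x : U, exists y : U, R x y)
  (htr : transitive R)
  (X : {set U}) (hX : regular R X) (e : U) (he : e \notin X) :
  reg_rank R (e |: X) = (h R X).+1.
Proof. have := @main U R hser htr X e hX he. exact. Qed.
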